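(* Let $k_1,k_2,k_3\ge2$ be integers and $M=S^2(k_1,k_2,k_3)$. For $N_1,N_2,N_3\in\mathbb{Z}_{\ge0}\cup\{\infty\}$ let $\mathcal{G}_{N_1,N_2,N_3}$ be the submodule of $\mathcal{S}(M)$ generated by the elements $S_{l_1}(a_1)S_{l_2}(a_2)S_{l_3}(a_3)$ with $0\le l_i\le N_i$. Then $\mathcal{G}_{k_1,k_2,\infty}=\mathcal{G}_{k_1,k_2,k_3}$.
   Context: $\mathcal{S}(M)$ is the Kauffman bracket skein module of $M$ over $\mathbb{Z}[A^{\pm1}]$. $S^2(k_1,k_2,k_3)$ is the Seifert manifold $\Sigma_{0,0}((k_1,1),(k_2,1),(k_3,1))$. $S_n$ are Chebyshev polynomials of the second kind ($S_0=1,S_1=x,S_{n+1}=xS_n-S_{n-1}$). $a_1,a_2,a_3$ are the three boundary-parallel curves of $\Sigma_{0,3}$, where $\Sigma_{0,3}\times I$ is the genus-two handlebody forming one side of the vertical Heegaard splitting of $M$, pushed into $M$; in $\mathcal{S}(M)$ these satisfy the relations that, in the symbol notation $s_i^n=S_n(a_i)$ (with $s_i^{-1}=0$, $s_i^n=-s_i^{-n-2}$ for $n\le-2$), the elements $R_{13}(n_1,n_2,n_3)-R_{13}(-n_1+k_1,n_2,-n_3+k_3)$ and $R_{23}(n_1,n_2,n_3)-R_{23}(n_1,-n_2+k_2,-n_3+k_3)$ vanish for all $n_i\in\mathbb{Z}$, where $R_{13}(n_1,n_2,n_3)=-A^{-n_1-n_3-2}s_1^{n_1}s_2^{n_2}s_3^{n_3}-A^{-n_1-n_3+2}s_1^{n_1-2}s_2^{n_2}s_3^{n_3-2}-A^{-n_1-n_3}s_1^{n_1-1}s_2^{n_2+1}s_3^{n_3-1}-A^{-n_1-n_3}s_1^{n_1-1}s_2^{n_2-1}s_3^{n_3-1}$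 and $R_{23}(n_1,n_2,n_3)=-A^{-n_2-n_3-2}s_1^{n_1}s_2^{n_2}s_3^{n_3}-A^{-n_2-n_3+2}s_1^{n_1}s_2^{n_2-2}s_3^{n_3-2}-A^{-n_2-n_3}s_1^{n_1+1}s_2^{n_2-1}s_3^{n_3-1}-A^{-n_2-n_3}s_1^{n_1-1}s_2^{n_2-1}s_3^{n_3-1}$ (and these generate all relations among the $S_{l_1}(a_1)S_{l_2}(a_2)S_{l_3}(a_3)$, which span $\mathcal{S}(M)$). *)

(* Defs.v *)
From HB Require Import structures.
From mathcomp Require Import all_boot all_order all_algebra.
Set Implicit Arguments. Unset Strict Implicit. Unset Printing Implicit Defensive.
Import Order.TTheory GRing.Theory Num.Theory.
Local Open Scope ring_scope.

(* The ground ring Z[A^{+-1}] is realised inside the fraction field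
   F = Frac(Z[A]) as the subring of elements p(A) / A^d. *)
Definition F := {fraction {poly int}}.
Definition Avar : F := tofrac ('X : {poly int}).
Definition Apow (z : int) : F := Avar ^ z.
Definition laurent (x : F) : Prop :=
  exists (p : {poly int}) (d : nat), x = tofrac p / Avar ^+ d.

(* Free module on the symbols S_{l1}(a1) S_{l2}(a2) S_{l3}(a3), l_i >= 0:
   an element is given by its coefficient function on N^3. *)
Definition V := nat * nat * nat -> F.
Definition basis (l : nat * nat * nat) : V :=
  fun m => if m == l then 1 else 0.

(* s^n = S_n(a): s^n (n >= 0), s^{-1} = 0, s^n = - s^{-n-2} (n <= -2) *)
Definition symc (n : int) : int :=
  if 0 <= n then 1 else if n == -1 then 0 else -1.
Definition symi (n : int) : nat :=
  if 0 <= n then absz n else absz (- n - 2).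
Definition mono (n1 n2 n3 : int) : V :=
  fun m => (symc n1 * symc n2 * symc n3)%:~R * basis (symi n1, symi n2, symi n3) m.

Definition R13 (n1 n2 n3 : int) : V := fun m =>
  - Apow (- n1 - n3 - 2) * mono n1 n2 n3 m
  - Apow (- n1 - n3 + 2) * mono (n1 - 2) n2 (n3 - 2) m
  - Apow (- n1 - n3) * mono (n1 - 1) (n2 + 1) (n3 - 1) m
  - Apow (- n1 - n3) * mono (n1 - 1) (n2 - 1) (n3 - 1) m.

Definition R23 (n1 n2 n3 : int) : V := fun m =>
  - Apow (- n2 - n3 - 2) * mono n1 n2 n3 m
  - Apow (- n2 - n3 + 2) * mono n1 (n2 - 2) (n3 - 2) m
  - Apow (- n2 - n3) * mono (n1 + 1) (n2 - 1) (n3 - 1) m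
  - Apow (- n2 - n3) * mono (n1 - 1) (n2 - 1) (n3 - 1) m.

Definition relgen (k1 k2 k3 : nat) (v : V) : Prop :=
  exists n1 n2 n3 : int,
    v = (fun m => R13 n1 n2 n3 m - R13 (- n1 + k1%:Z) n2 (- n3 + k3%:Z) m)
 \/ v = (fun m => R23 n1 n2 n3 m - R23 n1 (- n2 + k2%:Z) (- n3 + k3%:Z) m).

Definition lspan (P : V -> Prop) (x : V) : Prop :=
  exists (n : nat) (c : 'I_n -> F) (g : 'I_n -> V),
    (forall i, laurent (c i) /\ P (g i)) /\
    (forall m, x m = \sum_(i < n) c i * g i m).

(* N = None stands for infinity *)
Definition bounded (N : option nat) (l : nat) : bool :=
  if N is Some n then (l <= n)%N else true.

(* x represents an element of the submodule G_{N1,N2,N3} of the skein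
   module S(S^2(k1,k2,k3)) = (free module) / (relations) *)
Definition inG (k1 k2 k3 : nat) (N1 N2 N3 : option nat) (x : V) : Prop :=
  lspan (fun v => (exists l1 l2 l3, [/\ bounded N1 l1, bounded N2 l2,
                      bounded N3 l3 & v = basis (l1, l2, l3)])
                  \/ relgen k1 k2 k3 v) x.

(* Main.v *)
Require Import Defs.
From HB Require Import structures.
From mathcomp Require Import all_boot all_order all_algebra.
From mathcomp Require Import ring zify.
Set Implicit Arguments. Unset Strict Implicit. Unset Printing Implicit Defensive.
Import Order.TTheory GRing.Theory Num.Theory.
Local Open Scope ring_scope.

Lemma Avar_neq0 : Avar != 0.
Proof. by rewrite /Avar tofrac_eq0 polyX_eq0. Qed.

Lemma ApowK z : Apow z * Apow (- z) = 1.
Proof. by rewrite /Apow -expfzDr ?Avar_neq0 // subrr expr0z. Qed.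

Lemma laurent1 : laurent 1.
Proof. exists 1, 0%N; by rewrite tofrac1 expr0 invr1 mulr1. Qed.

Lemma laurentM a b : laurent a -> laurent b -> laurent (a * b).
Proof.
move=> [p [d ->]] [q [e ->]]; exists (p * q), (d + e)%N.
by rewrite tofracM exprD invfM mulrACA.
Qed.

Lemma laurentN a : laurent a -> laurent (- a).
Proof. move=> [p [d ->]]; exists (- p), d; by rewrite tofracN mulNr. Qed.

Lemma laurent_int (z : int) : laurent (z%:~R).
Proof. exists (z%:~R), 0%N; by rewrite expr0 invr1 mulr1 rmorph_int. Qed.

Lemma laurentA z : laurent (Apow z).
Proof.
rewrite /Apow; case: z => n.
  exists ('X ^+ n), 0%N; by rewrite expr0 invr1 mulr1 tofracXn.
exists 1, n.+1; by rewrite tofrac1 mul1r.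
Qed.
Section Span.
Variable P : V -> Prop.

Lemma lspan_ext x y : (forall m, x m = y m) -> lspan P x -> lspan P y.
Proof. move=> e [n [c [g [H1 H2]]]]; exists n, c, g; split=> // m; by rewrite -e. Qed.

Lemma lspan0 : lspan P (fun _ => 0).
Proof. exists 0%N, (fun _ => 0), (fun _ _ => 0); split; first by case.
by move=> m; rewrite big_ord0. Qed.

Lemma lspan_gen c v : laurent c -> P v -> lspan P (fun m => c * v m).
Proof.
move=> lc Pv; exists 1%N, (fun _ => c), (fun _ => v); split=> // m.
by rewrite big_ord1.
Qed.

Lemma lspan_add x y : lspan P x -> lspan P y -> lspan P (fun m => x m + y m).
Proof.
move=> [n1 [c1 [g1 [H1 E1]]]] [n2 [c2 [g2 [H2 E2]]]].
exists (n1 + n2)%N, (fun i => match split i with inl j => c1 j | inr j => c2 j end),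
  (fun i => match split i with inl j => g1 j | inr j => g2 j end); split.
  by move=> i; case: (split i).
move=> m; rewrite big_split_ord /= E1 E2; congr (_ + _); apply: eq_bigr => i _.
  by rewrite (unsplitK (inl i)).
by rewrite (unsplitK (inr i)).
Qed.

Lemma lspan_scale c x : laurent c -> lspan P x -> lspan P (fun m => c * x m).
Proof.
move=> lc [n [c1 [g1 [H1 E1]]]]; exists n, (fun i => c * c1 i), g1; split.
  by move=> i; have [? ?] := H1 i; split=> //; apply: laurentM.
by move=> m; rewrite E1 mulr_sumr; apply: eq_bigr => i _; rewrite mulrA.
Qed.

Lemma lspan_opp x : lspan P x -> lspan P (fun m => - x m).
Proof.
move=> h; apply: lspan_ext (lspan_scale (laurentN laurent1) h) => m.
by rewrite mulN1r.
Qed.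

Lemma lspan_sub x y : lspan P x -> lspan P y -> lspan P (fun m => x m - y m).
Proof. by move=> hx hy; apply: lspan_add hx (lspan_opp hy). Qed.

End Span.

Lemma lspan_mono (P Q : V -> Prop) x :
  (forall v, P v -> lspan Q v) -> lspan P x -> lspan Q x.
Proof.
move=> PQ [n [c [g [H E]]]].
elim: n c g H x E => [|n IH] c g H x E.
  apply: lspan_ext (lspan0 Q) => m; by rewrite E big_ord0.
pose y := fun m => \sum_(i < n) c (widen_ord (leqnSn n) i) * g (widen_ord (leqnSn n) i) m.
have hy : lspan Q y.
  by apply: (IH (fun i => c (widen_ord (leqnSn n) i)) (fun i => g (widen_ord (leqnSn n) i))).
have [lc Pg] := H ord_max.
apply: lspan_ext (lspan_add hy (lspan_scale lc (PQ _ Pg))) => m.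
by rewrite E big_ord_recr.
Qed.
Lemma symi_le (B : nat) (n : int) :
  (0 <= n <= B%:Z) \/ (- B%:Z - 2 <= n <= -2) -> (symi n <= B)%N.
Proof. rewrite /symi; case: ifP => H h.
 - case: h => h; lia.
 - move/negbT: H; rewrite -ltNge => H; case: h => h; lia.
Qed.

Lemma symi_lt (B : nat) (n : int) :
  (0 <= n < B%:Z) \/ (- B%:Z - 1 <= n <= -2) -> (symi n < B)%N.
Proof. rewrite /symi; case: ifP => H h.
 - case: h => h; lia.
 - move/negbT: H; rewrite -ltNge => H; case: h => h; lia.
Qed.

Lemma symc_m1 : symc (-1) = 0. Proof. by []. Qed.
Lemma symc_nat (n : nat) : symc n%:Z = 1. Proof. by []. Qed.
Lemma symi_nat (n : nat) : symi n%:Z = n. Proof. by []. Qed.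

Lemma ApowK' z : Apow (- z) * Apow z = 1.
Proof. by rewrite -{2}(opprK z) ApowK. Qed.

Lemma iso_eq (R : comRingType) (P Q X a u b c O : R) : P * Q = 1 ->
  - P * ((- Q * X - a * u - b - c - O) - (- a * u - b - c) - - O) = X.
Proof. move=> h; transitivity (P * Q * X); first ring. by rewrite h mul1r. Qed.

Section Main.
Variables k1 k2 k3 : nat.
Hypotheses (hk1 : (2 <= k1)%N) (hk2 : (2 <= k2)%N) (hk3 : (2 <= k3)%N).

Let G := inG k1 k2 k3 (Some k1) (Some k2) (Some k3).

Lemma G_rel v : relgen k1 k2 k3 v -> G v.
Proof.
move=> h; apply: lspan_ext (lspan_gen laurent1 (or_intror h)) => m; by rewrite mul1r.
Qed.

Lemma G_basis a b c : (a <= k1)%N -> (b <= k2)%N -> (c <= k3)%N -> G (basis (a, b, c)).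
Proof.
move=> ha hb hc; apply: lspan_ext (lspan_gen laurent1 (or_introl _)) => [m|].
  by rewrite mul1r.
by exists a, b, c; split.
Qed.

Definition good3 n1 n2 n3 :=
  symc n1 * symc n2 * symc n3 = 0 \/ G (basis (symi n1, symi n2, symi n3)).

Lemma good_mono c n1 n2 n3 : laurent c -> good3 n1 n2 n3 ->
  G (fun m => c * mono n1 n2 n3 m).
Proof.
move=> lc [H|H].
  by apply: lspan_ext (lspan0 _) => m; rewrite /mono H mul0r mulr0.
apply: lspan_ext (lspan_scale (laurentM lc (laurent_int _)) H) => m.
by rewrite /mono mulrA.
Qed.

Lemma G_R13 n1 n2 n3 :
  good3 n1 n2 n3 -> good3 (n1 - 2) n2 (n3 - 2) -> good3 (n1 - 1) (n2 + 1) (n3 - 1) ->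
  good3 (n1 - 1) (n2 - 1) (n3 - 1) -> G (R13 n1 n2 n3).
Proof.
move=> g1 g2 g3 g4.
apply: lspan_ext (lspan_sub (lspan_sub (lspan_sub
  (good_mono (laurentN (laurentA _)) g1) (good_mono (laurentA _) g2))
  (good_mono (laurentA _) g3)) (good_mono (laurentA _) g4)) => m /=.
rewrite /R13; reflexivity.
Qed.

Lemma G_R23 n1 n2 n3 :
  good3 n1 n2 n3 -> good3 n1 (n2 - 2) (n3 - 2) -> good3 (n1 + 1) (n2 - 1) (n3 - 1) ->
  good3 (n1 - 1) (n2 - 1) (n3 - 1) -> G (R23 n1 n2 n3).
Proof.
move=> g1 g2 g3 g4.
apply: lspan_ext (lspan_sub (lspan_sub (lspan_sub
  (good_mono (laurentN (laurentA _)) g1) (good_mono (laurentA _) g2))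
  (good_mono (laurentA _) g3)) (good_mono (laurentA _) g4)) => m /=.
rewrite /R23; reflexivity.
Qed.

Lemma mono_nat (a b c : nat) m : mono a b c m = basis (a, b, c) m.
Proof. by rewrite /mono !symc_nat !symi_nat !mulr1 mul1r. Qed.

Lemma from_R13 (a b c : nat) :
  let n1 := a%:Z in let n2 := b%:Z in let n3 := c%:Z in
  good3 (n1 - 2) n2 (n3 - 2) -> good3 (n1 - 1) (n2 + 1) (n3 - 1) ->
  good3 (n1 - 1) (n2 - 1) (n3 - 1) ->
  let n1' := - n1 + k1%:Z in let n3' := - n3 + k3%:Z in
  good3 n1' n2 n3' -> good3 (n1' - 2) n2 (n3' - 2) -> good3 (n1' - 1) (n2 + 1) (n3' - 1) ->
  good3 (n1' - 1) (n2 - 1) (n3' - 1) -> G (basis (a, b, c)).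
Proof.
move=> n1 n2 n3 g2 g3 g4 n1' n3' h1 h2 h3 h4.
have Gv : G (fun m => R13 n1 n2 n3 m - R13 n1' n2 n3' m).
  by apply: G_rel; exists n1, n2, n3; left.
have Gt : G (fun m => - Apow (- n1 - n3 + 2) * mono (n1 - 2) n2 (n3 - 2) m
  - Apow (- n1 - n3) * mono (n1 - 1) (n2 + 1) (n3 - 1) m
  - Apow (- n1 - n3) * mono (n1 - 1) (n2 - 1) (n3 - 1) m).
  apply: lspan_sub (lspan_sub (good_mono (laurentN (laurentA _)) g2)
    (good_mono (laurentA _) g3)) (good_mono (laurentA _) g4).
have Go := G_R13 h1 h2 h3 h4.
apply: lspan_ext (lspan_scale (laurentN (laurentA (- (- n1 - n3 - 2))))
   (lspan_sub (lspan_sub Gv Gt) (lspan_opp Go))) => m.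
rewrite /R13 mono_nat.
set z := - n1 - n3 - 2.
set X := basis _ m. set P := Apow (- z).
have hP : P * Apow z = 1 by apply: ApowK'.
exact: iso_eq.
Qed.

Lemma from_R23 (a b c : nat) :
  let n1 := a%:Z in let n2 := b%:Z in let n3 := c%:Z in
  good3 n1 (n2 - 2) (n3 - 2) -> good3 (n1 + 1) (n2 - 1) (n3 - 1) ->
  good3 (n1 - 1) (n2 - 1) (n3 - 1) ->
  let n2' := - n2 + k2%:Z in let n3' := - n3 + k3%:Z in
  good3 n1 n2' n3' -> good3 n1 (n2' - 2) (n3' - 2) -> good3 (n1 + 1) (n2' - 1) (n3' - 1) ->
  good3 (n1 - 1) (n2' - 1) (n3' - 1) -> G (basis (a, b, c)).
Proof.
move=> n1 n2 n3 g2 g3 g4 n2' n3' h1 h2 h3 h4.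
have Gv : G (fun m => R23 n1 n2 n3 m - R23 n1 n2' n3' m).
  by apply: G_rel; exists n1, n2, n3; right.
have Gt : G (fun m => - Apow (- n2 - n3 + 2) * mono n1 (n2 - 2) (n3 - 2) m
  - Apow (- n2 - n3) * mono (n1 + 1) (n2 - 1) (n3 - 1) m
  - Apow (- n2 - n3) * mono (n1 - 1) (n2 - 1) (n3 - 1) m).
  apply: lspan_sub (lspan_sub (good_mono (laurentN (laurentA _)) g2)
    (good_mono (laurentA _) g3)) (good_mono (laurentA _) g4).
have Go := G_R23 h1 h2 h3 h4.
apply: lspan_ext (lspan_scale (laurentN (laurentA (- (- n2 - n3 - 2))))
   (lspan_sub (lspan_sub Gv Gt) (lspan_opp Go))) => m.
rewrite /R23 mono_nat.
set z := - n2 - n3 - 2.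
set X := basis _ m. set P := Apow (- z).
have hP : P * Apow z = 1 by apply: ApowK'.
exact: iso_eq.
Qed.


Lemma goodI c n1 n2 n3
  (IH : forall c', (c' < c)%N -> forall a b, (a <= k1)%N -> (b <= k2)%N -> G (basis (a, b, c'))) :
  n1 = -1 \/ n2 = -1 \/ n3 = -1 \/
  (((0 <= n1 <= k1%:Z) \/ (- k1%:Z - 2 <= n1 <= -2)) /\
   ((0 <= n2 <= k2%:Z) \/ (- k2%:Z - 2 <= n2 <= -2)) /\
   ((0 <= n3 < c%:Z) \/ (- c%:Z - 1 <= n3 <= -2))) -> good3 n1 n2 n3.
Proof.
case=> [->|[->|[->|[h1 [h2 h3]]]]].
- by left; rewrite symc_m1 !mul0r.
- by left; rewrite symc_m1 mulr0 mul0r.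
- by left; rewrite symc_m1 mulr0.
- right; apply: IH; [exact: symi_lt | exact: symi_le | exact: symi_le].
Qed.

Lemma symi_pos (n : int) (m : nat) : n = m%:Z -> symi n = m.
Proof. by move->. Qed.

Lemma mainG c : forall a b, (a <= k1)%N -> (b <= k2)%N -> G (basis (a, b, c)).
Proof.
elim/ltn_ind: c => c IH a b ha hb.
case: (leqP c k3) => hc; first exact: G_basis.
case: (ltnP b k2) => hb2.
  by apply: from_R13; apply: (goodI IH); lia.
case: (ltnP a k1) => ha1.
  by apply: from_R23; apply: (goodI IH); lia.
have ea : a = k1 by lia.
have eb : b = k2 by lia.
subst a b.
apply: from_R13; try (apply: (goodI IH); lia).
right.
rewrite (@symi_pos _ k1.-1); last lia.
rewrite (@symi_pos _ k2.+1); last lia.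
rewrite (@symi_pos _ c.-1); last lia.
by apply: from_R23; apply: (goodI IH); lia.
Qed.

End Main.

Theorem lemma5p1 (k1 k2 k3 : nat) :
  (2 <= k1)%N -> (2 <= k2)%N -> (2 <= k3)%N ->
  forall x : V,
    inG k1 k2 k3 (Some k1) (Some k2) None x <->
    inG k1 k2 k3 (Some k1) (Some k2) (Some k3) x.
Proof.
move=> hk1 hk2 hk3 x; split.
  apply: lspan_mono => v [[l1 [l2 [l3 [h1 h2 _ ->]]]] | hr].
    exact: mainG.
  exact: G_rel.
apply: lspan_mono => v [[l1 [l2 [l3 [h1 h2 _ ->]]]] | hr].
  apply: lspan_ext (lspan_gen laurent1 (or_introl _)) => [m|]; first by rewrite mul1r.
  by exists l1, l2, l3; split.
apply: lspan_ext (lspan_gen laurent1 (or_intror hr)) => m; by rewrite mul1r.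
Qed.
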